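(* Let $\mathcal S=(E,\mathcal I)$ and $\mathcal S'=(E',\mathcal I')$ be $r$-covering systems with $|E|=|E'|$ that are similar, i.e., there is a bijection $\psi:\mathcal I\to\mathcal I'$ with $|\psi(X)|=|X|$ for all $X\in\mathcal I$. If $\texttt{a}$ is an activity of $\mathcal S$ and $\texttt{a}'$ is an activity of $\mathcal S'$, then their activity vectors are equal.
   Context: For finite sets $X\subseteq Y$, write $[X,Y]=\{Z: X\subseteq Z\subseteq Y\}$. An $r$-covering system is a pair $\mathcal S=(E,\mathcal I)$ where $E$ is a finite set and $\mathcal I$ is a collection of subsets of $E$, each of cardinality at most $r$, such that for every $I\in\mathcal I$ there exists $B\in\mathcal I$ with $|B|=r$ and $[I,B]\subseteq\mathcal I$. Members of $\mathcal I$ of cardinality $r$ are called bases, and $\mathcal B$ denotes the set of bases. An activity of $\mathcal S$ is a function $\texttt{a}:\mathcal B\to 2^E$ such that for every $B\in\mathcal B$, $\texttt{a}(B)\subseteq B$ and $[B\setminus\texttt{a}(B),B]\subseteq\mathcal I$, and such that every $I\in\mathcal I$ belongs to $[B\setminus\texttt{a}(B),B]$ for exactly one $B\in\mathcal B$. The activity vector is $(a_0,\dots,a_r)$ where $a_i$ is the number of bases $B$ with $|\texttt{a}(B)|=i$. *)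

(* Defs.v *)
From mathcomp Require Import all_boot.
Set Implicit Arguments. Unset Strict Implicit. Unset Printing Implicit Defensive.

Definition interval (E : finType) (X Y : {set E}) : {set {set E}} :=
  [set Z : {set E} | (X \subset Z) && (Z \subset Y)].

Definition covering_system (E : finType) (r : nat) (I : {set {set E}}) : Prop :=
  (forall X, X \in I -> #|X| <= r) /\
  (forall X, X \in I -> exists B, [/\ B \in I, #|B| = r & interval X B \subset I]).

Definition bases (E : finType) (r : nat) (I : {set {set E}}) : {set {set E}} :=
  [set B in I | #|B| == r].

(* activity: only the values on bases matter *)
Definition activity (E : finType) (r : nat) (I : {set {set E}})
  (a : {set E} -> {set E}) : Prop :=
  (forall B, B \in bases r I -> a B \subset B /\ interval (B :\: a B) B \subset I) /\
  (forall X, X \in I -> exists! B, B \in bases r I /\ X \in interval (B :\: a B) B).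

Definition activity_count (E : finType) (r : nat) (I : {set {set E}})
  (a : {set E} -> {set E}) (i : nat) : nat :=
  #|[set B in bases r I | #|a B| == i]|.

Definition similar (E E' : finType) (I : {set {set E}}) (I' : {set {set E'}}) : Prop :=
  exists psi : {set E} -> {set E'},
    [/\ {in I &, injective psi}, psi @: I = I' & forall X, X \in I -> #|psi X| = #|X|].

(* Main.v *)
Require Import Defs.
From mathcomp Require Import all_boot zify.
Set Implicit Arguments. Unset Strict Implicit. Unset Printing Implicit Defensive.
Lemma interval_count (E : finType) (A B : {set E}) (r m : nat) :
  A \subset B -> #|B| = r ->
  #|[set X in interval (B :\: A) B | #|X| + m == r]| = 'C(#|A|, m).
Proof.
move=> sAB cB.
rewrite -cards_draws.
have -> : [set X in interval (B :\: A) B | #|X| + m == r] =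
  (fun S => B :\: S) @: [set S : {set E} | S \subset A & #|S| == m].
  apply/setP => X; rewrite !inE; apply/idP/imsetP.
  - case/andP => /andP [h1 h2] h3.
    exists (B :\: X).
      rewrite inE; apply/andP; split.
        apply/subsetP => x; rewrite !inE => /andP [nx xB].
        apply/negPn/negP => nA.
        have: x \in B :\: A by rewrite inE nA.
        by move/(subsetP h1); rewrite (negbTE nx).
      apply/eqP; rewrite cardsD (setIidPr h2) cB.
      by move/eqP: h3 => <-; rewrite addKn.
    by rewrite setDDr setDv set0U (setIidPr h2).
  - case=> S; rewrite inE => /andP [sSA /eqP cS] ->.
    have sSB : S \subset B by apply: subset_trans sAB.
    rewrite subsetDl andbT; apply/andP; split.
      by apply: setDS.
    rewrite cardsD (setIidPr sSB) cS cB subnK //.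
    by rewrite -cS -cB subset_leq_card.
apply: card_in_imset => S1 S2; rewrite !inE => /andP [s1 _] /andP [s2 _] e.
have sB1 : S1 \subset B by apply: subset_trans sAB.
have sB2 : S2 \subset B by apply: subset_trans sAB.
by rewrite -(setIidPr sB1) -(setIidPr sB2) -[B :&: S1]set0U -[B :&: S2]set0U
  -(setDv B) -!setDDr e.
Qed.
Lemma N_sum (E : finType) (r : nat) (I : {set {set E}}) a m :
  activity r I a ->
  #|[set X in I | #|X| + m == r]| = \sum_(B in bases r I) 'C(#|a B|, m).
Proof.
move=> [H1 H2].
rewrite -sum1_card.
transitivity (\sum_(X in [set X in I | #|X| + m == r])
   \sum_(B in bases r I) (X \in interval (B :\: a B) B : nat)).
  apply: eq_bigr => X; rewrite inE => /andP [XI _].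
  have [B [[HB HX] Hu]] := H2 X XI.
  rewrite (bigD1 B) //= HX big1 // => B' /andP [HB' nB'].
  case e: (X \in _) => //.
  by move: nB'; rewrite (Hu B' (conj HB' e)) eqxx.
rewrite exchange_big; apply: eq_bigr => B HB.
have [sa si] := H1 B HB.
move: HB; rewrite inE => /andP [BI /eqP cB].
rewrite -(interval_count m sa cB) -sum1_card big_mkcond /=.
rewrite [RHS]big_mkcond /=; apply: eq_bigr => X _.
have si' : forall Y : {set E}, (B :\: a B \subset Y) && (Y \subset B) -> Y \in I.
  by move=> Y h; apply: (subsetP si); rewrite inE.
rewrite !inE.
case e: ((B :\: a B \subset X) && (X \subset B)); last by case: ifP.
by rewrite (si' X e).
Qed.

Lemma sum_group (E : finType) (r : nat) (I : {set {set E}}) a m :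
  activity r I a ->
  \sum_(B in bases r I) 'C(#|a B|, m) =
  \sum_(0 <= j < r.+1) activity_count r I a j * 'C(j, m).
Proof.
move=> [H1 _].
transitivity (\sum_(B in bases r I) \sum_(j < r.+1) (#|a B| == j) * 'C(j, m)).
  apply: eq_bigr => B HB.
  have [sa _] := H1 B HB.
  move: HB; rewrite inE => /andP [_ /eqP cB].
  rewrite (_ : \sum_(j < r.+1) _ = \sum_(j < r.+1 | j == #|a B| :> nat) 'C(j, m)); last first.
    by rewrite [RHS]big_mkcond; apply: eq_bigr => j _; rewrite eq_sym; case: (_ == _); rewrite ?mul1n ?mul0n.
  by rewrite (big_ord1_eq _ (fun j => 'C(j, m)) #|a B| r.+1) ltnS -cB subset_leq_card.
rewrite exchange_big big_mkord; apply: eq_bigr => j _.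
rewrite -big_distrl /=; congr (_ * _).
rewrite /activity_count -sum1_card big_mkcond /= [RHS]big_mkcond /=.
apply: eq_bigr => B _; rewrite !inE.
by case: (B \in I); case: (_ == r); case: (_ == j).
Qed.

Lemma N_sim (E E' : finType) (r : nat) (I : {set {set E}}) (I' : {set {set E'}}) m :
  similar I I' ->
  #|[set X in I | #|X| + m == r]| = #|[set X in I' | #|X| + m == r]|.
Proof.
case=> psi [inj im sz].
have -> : [set X in I' | #|X| + m == r] = psi @: [set X in I | #|X| + m == r].
  apply/setP => Y; rewrite inE; apply/andP/imsetP.
  - case; rewrite -im => /imsetP [X XI ->]; rewrite sz // => h.
    by exists X => //; rewrite inE XI.
  - case=> X; rewrite inE => /andP [XI h] ->; split.
      by rewrite -im imset_f.
    by rewrite sz.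
rewrite card_in_imset // => X1 X2; rewrite !inE => /andP [h1 _] /andP [h2 _].
exact: inj.
Qed.

Lemma invert (f g : nat -> nat) r :
  (forall m, \sum_(0 <= j < r.+1) f j * 'C(j, m) = \sum_(0 <= j < r.+1) g j * 'C(j, m)) ->
  forall i, i <= r -> f i = g i.
Proof.
move=> H.
suff K : forall k, k <= r -> f (r - k) = g (r - k).
  by move=> i ir; rewrite -(subKn ir); apply: K; rewrite leq_subr.
elim/ltn_ind => k IH kr.
have := H (r - k).
have l1 : 0 <= r - k by [].
have l2 : r - k <= r.+1 by rewrite (leq_trans (leq_subr _ _)).
rewrite !(big_cat_nat l1 l2) /=.
have Z : forall F : nat -> nat, \sum_(0 <= j < r - k) F j * 'C(j, r - k) = 0.
  move=> F; rewrite big1_seq // => j; rewrite mem_index_iota => /andP [_ jl].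
  by rewrite bin_small ?muln0.
rewrite !Z.
have l3 : r - k < r.+1 by rewrite ltnS leq_subr.
rewrite !add0n !(big_ltn l3) binn !muln1.
rewrite (eq_big_nat _ _ (F2 := fun j => g j * 'C(j, r - k))).
  by move/addIn.
move=> j /andP [lj jr].
have jr' : j <= r by [].
rewrite -(subKn jr') IH //; lia.
Qed.

Theorem mainTheorem5 (E E' : finType) (r : nat)
  (I : {set {set E}}) (I' : {set {set E'}})
  (a : {set E} -> {set E}) (a' : {set E'} -> {set E'}) :
  covering_system r I -> covering_system r I' ->
  #|E| = #|E'| -> similar I I' ->
  activity r I a -> activity r I' a' ->
  forall i, i <= r -> activity_count r I a i = activity_count r I' a' i.
Proof.
move=> _ _ _ hs ha ha'.
apply: invert => m.
by rewrite -(sum_group m ha) -(sum_group m ha') -(N_sum m ha) -(N_sum m ha') (N_sim r m hs).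
Qed.
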